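(* Let $(\mathcal{G},\alpha)$ be an abstract GKM graph and $p\neq q$ vertices. Set $P=\prod_{e\in\mathcal{E}_p\setminus\mathcal{E}_{pq}}\alpha(e)$, $Q=\prod_{e\in\mathcal{E}_q\setminus\mathcal{E}_{qp}}\alpha(e)$, for $e\in\mathcal{E}_{pq}$ let $c(e)=|\{e'\in\mathcal{E}_{pq}: e'\neq e,\ \alpha(\overline{e'})=-\alpha(e')\}|$, and let $E=\{e\in\mathcal{E}_{pq}: c(e)\text{ even}\}$, $O=\{e\in\mathcal{E}_{pq}: c(e)\text{ odd}\}$. Then $P-Q$ is divisible by $\prod_{e\in E}\alpha(e)$ and $P+Q$ is divisible by $\prod_{e\in O}\alpha(e)$ in $H^*(BT)$.
   Context: $H^*(BT)=\mathbb{Z}[x_1,\dots,x_r]$ with $\deg x_i=2$. Let $\mathcal{G}$ be a finite $n$-valent undirected graph (multiple edges allowed, no loops) with vertex set $\mathcal{V}$ and set of directed edges $\mathcal{E}$; for $e\in\mathcal{E}$, $\overline e$ is the reversed edge, $i(e),t(e)$ its initial and terminal vertices, $\mathcal{E}_p=\{e: i(e)=p\}$, $\mathcal{E}_{pq}=\{e: i(e)=p,\ t(e)=q\}$. An axial function $\alpha:\mathcal{E}\to H^2(BT)$ satisfies: $\alpha(\overline e)=\pm\alpha(e)$; $\alpha(e),\alpha(e')$ linearly independent over $\mathbb{Z}$ if $e\ne e'$, $i(e)=i(e')$; coefficients of each $\alpha(e)$ have gcd $1$. An abstract GKM graph is such $(\mathcal{G},\alpha)$ admitting a parallel transport, i.e.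 bijections $\mathcal{P}_e:\mathcal{E}_{i(e)}\to\mathcal{E}_{t(e)}$ with $\mathcal{P}_{\overline e}=\mathcal{P}_e^{-1}$, $\mathcal{P}_e(e)=\overline e$, $\alpha(\mathcal{P}_e(e'))-\alpha(e')\in\mathbb{Z}\alpha(e)$ for all $e'\in\mathcal{E}_{i(e)}$. *)

(* Defs.v *)
From HB Require Import structures.
From mathcomp Require Import all_boot all_order all_algebra.
From mathcomp Require Import mpoly.
Set Implicit Arguments. Unset Strict Implicit. Unset Printing Implicit Defensive.
Import Order.TTheory GRing.Theory Num.Theory.
Local Open Scope ring_scope.

(* H^*(BT) = Z[x_1,...,x_r] is {mpoly int[r]};
   H^2(BT) is the free Z-module of integral linear forms, represented by
   coefficient vectors 'rV[int]_r, embedded into H^*(BT) by [lin]. *)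
Definition lin (r : nat) (v : 'rV[int]_r) : {mpoly int[r]} :=
  \sum_(i < r) (v ord0 i)%:MP * 'X_i.

(* A finite n-valent graph without loops (multiple edges allowed):
   V vertices, E directed edges, rev the reversal, src/tgt = i(e), t(e). *)
Record graph (n : nat) := Graph {
  V : finType;
  E : finType;
  src : E -> V;
  tgt : E -> V;
  rev : E -> E;
  revK : involutive rev;
  src_rev : forall e, src (rev e) = tgt e;
  no_loop : forall e, src e != tgt e;
  valent : forall p : V, #|[set e | src e == p]| = n
}.

Definition axial (n r : nat) (G : graph n) (alpha : E G -> 'rV[int]_r) : Prop :=
  (forall e, alpha (rev e) = alpha e \/ alpha (rev e) = - alpha e) /\
  (forall e e', e != e' -> src e = src e' ->
     forall a b : int, a *: alpha e + b *: alpha e' = 0 -> a = 0 /\ b = 0) /\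
  (forall e (d : int), (forall i, (d %| alpha e ord0 i)%Z) -> `|d| = 1).

Definition parallel_transport (n r : nat) (G : graph n)
  (alpha : E G -> 'rV[int]_r) (PT : E G -> E G -> E G) : Prop :=
  forall e e', src e' = src e ->
    [/\ src (PT e e') = tgt e,
        PT (rev e) (PT e e') = e',
        PT e e = rev e &
        exists k : int, alpha (PT e e') - alpha e' = k *: alpha e].

Definition abstract_GKM (n r : nat) (G : graph n) (alpha : E G -> 'rV[int]_r) : Prop :=
  axial alpha /\ exists PT, parallel_transport alpha PT.

Definition mdvd (r : nat) (a b : {mpoly int[r]}) : Prop :=
  exists c : {mpoly int[r]}, b = c * a.

Definition cnt (n r : nat) (G : graph n) (alpha : E G -> 'rV[int]_r)
  (p q : V G) (e : E G) : nat :=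
  #|[set e' | [&& src e' == p, tgt e' == q, e' != e & alpha (rev e') == - alpha e']]|.

(* Main.v *)
Require Import Defs.
From HB Require Import structures.
From mathcomp Require Import all_boot all_order all_algebra.
From mathcomp Require Import mpoly.
Set Implicit Arguments. Unset Strict Implicit. Unset Printing Implicit Defensive.
Import Order.TTheory GRing.Theory Num.Theory.
Local Open Scope ring_scope.

Section Alg.
Variable r : nat.
Local Notation MP := {mpoly int[r]}.

Lemma mdvd0 (a : MP) : mdvd a 0. Proof. by exists 0; rewrite mul0r. Qed.
Lemma mdvdD (a x y : MP) : mdvd a x -> mdvd a y -> mdvd a (x + y).
Proof. by move=> [c ->] [d ->]; exists (c + d); rewrite mulrDl. Qed.
Lemma mdvdN (a x : MP) : mdvd a x -> mdvd a (- x).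
Proof. by move=> [c ->]; exists (- c); rewrite mulNr. Qed.
Lemma mdvdMl (a x y : MP) : mdvd a x -> mdvd a (y * x).
Proof. by move=> [c ->]; exists (y * c); rewrite mulrA. Qed.
Lemma mdvdZ (a x : MP) (c : int) : mdvd a x -> mdvd a (c *: x).
Proof. by move=> [d ->]; exists (c *: d); rewrite scalerAl. Qed.
Lemma mdvd_sum (a : MP) (I : eqType) (s : seq I) (P : pred I) (F : I -> MP) :
  (forall i, P i -> mdvd a (F i)) -> mdvd a (\sum_(i <- s | P i) F i).
Proof. move=> H; apply: big_ind => //; [exact: mdvd0 | exact: mdvdD]. Qed.

Lemma lin_add (u w : 'rV[int]_r) : lin (u + w) = lin u + lin w.
Proof. by rewrite /lin -big_split; apply: eq_bigr => i _; rewrite mxE rmorphD mulrDl. Qed.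
Lemma lin_scale (k : int) (u : 'rV[int]_r) : lin (k *: u) = k%:MP * lin u.
Proof. by rewrite /lin mulr_sumr; apply: eq_bigr => i _; rewrite mxE rmorphM mulrA. Qed.
Lemma lin_opp (u : 'rV[int]_r) : lin (- u) = - lin u.
Proof. by rewrite -scaleN1r lin_scale rmorphN1 mulN1r. Qed.
Lemma lin_delta (i : 'I_r) : lin (delta_mx 0 i) = 'X_i.
Proof.
rewrite /lin (bigD1 i) //= big1 ?addr0; first by rewrite mxE !eqxx mul1r.
by move=> j /negbTE ji; rewrite mxE eq_sym ji /= mul0r.
Qed.
Lemma lin_coef (u : 'rV[int]_r) (k : 'I_r) : (lin u)@_U_(k) = u 0 k.
Proof.
rewrite /lin raddf_sum /= (bigD1 k) //= big1 ?addr0.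
  by rewrite mcoeffCM mcoeffXU eqxx mulr1.
by move=> j /negbTE jk; rewrite mcoeffCM mcoeffXU jk mulr0.
Qed.


Lemma compX (k : nat) (F : 'I_r -> {mpoly int[k]}) (i : 'I_r) :
  'X_i \mPo [tuple F j | j < r] = F i.
Proof. by rewrite comp_mpolyXU -tnth_nth tnth_mktuple. Qed.

Lemma comp_comp (k l : nat) (p : MP) (lq : r.-tuple {mpoly int[k]})
   (lr : k.-tuple {mpoly int[l]}) :
  (p \mPo lq) \mPo lr = p \mPo [tuple (tnth lq i \mPo lr) | i < r].
Proof.
rewrite [p \mPo lq]comp_mpolyE [RHS]comp_mpolyE raddf_sum /=; apply: eq_bigr => m _.
rewrite comp_mpolyZ rmorph_prod /=; congr (_ *: _); apply: eq_bigr => i _.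
by rewrite rmorphXn /= tnth_mktuple.
Qed.

Lemma comp_lin (w : 'rV[int]_r) (M : 'M[int]_r) :
  lin w \mPo [tuple lin (row i M) | i < r] = lin (w *m M).
Proof.
rewrite /lin rmorph_sum /=.
under eq_bigr => i _ do rewrite rmorphM /= comp_mpolyC compX /lin mulr_sumr.
rewrite exchange_big /=; apply: eq_bigr => j _.
rewrite mxE rmorph_sum /= mulr_suml; apply: eq_bigr => i _.
by rewrite mxE rmorphM mulrA.
Qed.

Definition zt (j : 'I_r) : r.-tuple MP := [tuple (if i == j then 0 else 'X_i) | i < r].

Lemma zX (j : 'I_r) : 'X_j \mPo zt j = 0.
Proof. by rewrite compX eqxx. Qed.

Lemma zdiv (j : 'I_r) (f : MP) : mdvd 'X_j (f - (f \mPo zt j)).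
Proof.
rewrite comp_mpolyEX {1}(mpolyE f) -sumrB; apply: mdvd_sum => m _.
rewrite -scalerBr; apply: mdvdZ.
rewrite comp_mpolyX (mpolyXE_id _ m).
case: (posnP (m j)) => mj.
  suff -> : \prod_(i < r) tnth (zt j) i ^+ m i = \prod_(i < r) 'X_i ^+ m i.
    by rewrite subrr; exact: mdvd0.
  apply: eq_bigr => i _; rewrite tnth_mktuple; case: eqP => // ->.
  by rewrite mj !expr0.
rewrite [X in _ - X](bigD1 j) //= tnth_mktuple eqxx expr0n gtn_eqF // mul0r subr0.
rewrite (bigD1 j) //= mulrC -(prednK mj) exprSr mulrA.
by exists (\prod_(i < r | i != j) 'X_i ^+ m i * 'X_j ^+ (m j).-1).
Qed.

Definition mprime (a : MP) := forall x y, mdvd a (x * y) -> mdvd a x \/ mdvd a y.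

Lemma zdivP (j : 'I_r) (f : MP) : (f \mPo zt j) = 0 -> mdvd 'X_j f.
Proof. by move=> h; have := zdiv j f; rewrite h subr0. Qed.

Lemma Xprime (j : 'I_r) : mprime 'X_j.
Proof.
move=> x y [c hc].
have : (x \mPo zt j) * (y \mPo zt j) = 0 by rewrite -rmorphM /= hc rmorphM /= zX mulr0.
by move/eqP; rewrite mulf_eq0 => /orP [] /eqP h; [left|right]; apply: zdivP.
Qed.


Lemma zlin_coef (u : 'rV[int]_r) (j k : 'I_r) : k != j ->
  ((lin u) \mPo zt j)@_U_(k) = u ord0 k.
Proof.
move=> kj; rewrite /lin rmorph_sum raddf_sum /= (bigD1 k) //= big1 ?addr0.
  by rewrite rmorphM /= comp_mpolyC compX (negbTE kj) mcoeffCM mcoeffXU eqxx mulr1.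
move=> i ik; rewrite rmorphM /= comp_mpolyC compX mcoeffCM.
by case: eqP => _; rewrite ?mcoeff0 ?mcoeffXU ?(negbTE ik) mulr0.
Qed.

Definition primitive (v : 'rV[int]_r) :=
  forall d : int, (forall i, (d %| v ord0 i)%Z) -> `|d| = 1.

Lemma setup (v : 'rV[int]_r) : primitive v ->
  exists (i0 : 'I_r) (R : 'M[int]_r) (s : int),
    [/\ R \in unitmx, v = s *: row i0 R & s * s = 1].
Proof.
move=> prim.
have r0 : (0 < r)%N.
  case: (posnP r) => // r0.
  have := prim 2 => /(_ _) h; suff: `|2%:Z| = 1 by [].
  by apply: h => i; exfalso; case: i => k; rewrite r0.
have [L _ [R uR [d _ hv]]] := int_Smith_normal_form v.
pose i0 := Ordinal r0.
pose s := L ord0 ord0 * d`_0.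
have ev : forall j, v ord0 j = s * R i0 j.
  move=> j; rewrite hv mxE (bigD1 i0) //= big1 ?addr0.
    by rewrite mxE big_ord1 mxE /= mulr1n.
  move=> k hk; rewrite mxE big_ord1 mxE /=.
  have -> : (0%N == k :> nat) = false by apply/negbTE; rewrite eq_sym; apply: hk.
  by rewrite mulr0n mulr0 mul0r.
have s1 : `|s| = 1 by apply: prim => i; rewrite ev; apply: dvdz_mulr.
exists i0, R, s; split => //.
  by apply/rowP => j; rewrite ev !mxE.
by rewrite -expr2 -real_normK ?num_real // s1 expr1n.
Qed.


Lemma lin_prime (v : 'rV[int]_r) : primitive v -> mprime (lin v).
Proof.
move=> /setup [i0 [R [s [uR hv ss]]]].
set tA := [tuple lin (row i (invmx R)) | i < r].
set tR := [tuple lin (row i R) | i < r].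
have tsK : forall f : MP, ((f \mPo tA) \mPo tR) = f.
  move=> f; rewrite comp_comp -[RHS]comp_mpoly_id; congr (f \mPo _).
  apply: eq_mktuple => i; rewrite tnth_mktuple comp_lin -row_mul mulVmx //.
  by rewrite row1 lin_delta.
have sv : (lin v \mPo tA) = s%:MP * 'X_i0.
  by rewrite comp_lin hv -scalemxAl -row_mul mulmxV // row1 lin_scale lin_delta.
have tX : ('X_i0 \mPo tR) = s%:MP * lin v.
  by rewrite compX hv lin_scale mulrA -rmorphM ss rmorph1 mul1r.
move=> x y [c hc].
have : mdvd 'X_i0 ((x \mPo tA) * (y \mPo tA)).
  by exists ((c \mPo tA) * s%:MP); rewrite -rmorphM hc rmorphM /= sv mulrA.
case/Xprime => [[g hg]|[g hg]]; [left|right]; exists ((g \mPo tR) * s%:MP).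
  by rewrite -[x]tsK hg rmorphM /= tX mulrA.
by rewrite -[y]tsK hg rmorphM /= tX mulrA.
Qed.

Lemma lin_nondiv (v w : 'rV[int]_r) : primitive v ->
  (forall a b : int, a *: v + b *: w = 0 -> a = 0 /\ b = 0) ->
  ~ mdvd (lin v) (lin w).
Proof.
move=> /setup [i0 [R [s [uR hv ss]]]] indep [c hc].
set tA := [tuple lin (row i (invmx R)) | i < r].
have sv : (lin v \mPo tA) = s%:MP * 'X_i0.
  by rewrite comp_lin hv -scalemxAl -row_mul mulmxV // row1 lin_scale lin_delta.
have h1 : ((lin (w *m invmx R)) \mPo zt i0) = 0.
  by rewrite -comp_lin hc !rmorphM /= sv rmorphM /= comp_mpolyC zX !mulr0.
have h2 : forall k, k != i0 -> (w *m invmx R) ord0 k = 0.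
  by move=> k hk; have := zlin_coef (w *m invmx R) hk; rewrite h1 mcoeff0.
set t := (w *m invmx R) ord0 i0.
have h3 : w *m invmx R = (t * s) *: (v *m invmx R).
  rewrite hv -scalemxAl -row_mul mulmxV // row1 scalerA -mulrA ss mulr1.
  apply/rowP => k; rewrite [in RHS]mxE [in RHS]mxE.
  case: (eqVneq k i0) => [->|hk]; first by rewrite !eqxx mulr1.
  by rewrite h2 // andbF mulr0.
have h4 : w = (t * s) *: v.
  have := congr1 (mulmx^~ R) h3; rewrite -scalemxAl -!mulmxA mulVmx // !mulmx1.
  by [].
have := indep (- (t * s)) 1; rewrite h4 scaleNr scale1r addNr => /(_ erefl) [_ /eqP].
by rewrite oner_eq0.
Qed.


Lemma prime_prod_cancel (a : MP) (I : eqType) (s : seq I) (Pr : pred I)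
    (F : I -> MP) (y : MP) : mprime a ->
  (forall i, i \in s -> Pr i -> ~ mdvd a (F i)) ->
  mdvd a ((\prod_(i <- s | Pr i) F i) * y) -> mdvd a y.
Proof.
move=> pa; elim: s => [|x s IH] nd; first by rewrite big_nil mul1r.
rewrite big_cons; case: ifP => hx h; last by apply: IH => // i hi; apply: nd; rewrite inE hi orbT.
apply: IH; first by move=> i hi; apply: nd; rewrite inE hi orbT.
rewrite -mulrA in h; case/pa: h => // h.
by case: (nd x (mem_head _ _) hx h).
Qed.

Lemma prod_dvd (I : eqType) (Pr : pred I) (F : I -> MP) (x : MP) :
  (forall i, Pr i -> mprime (F i)) ->
  (forall i j, Pr i -> Pr j -> i != j -> ~ mdvd (F i) (F j)) ->
  (forall i, Pr i -> mdvd (F i) x) ->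
  forall s : seq I, uniq s -> mdvd (\prod_(i <- s | Pr i) F i) x.
Proof.
move=> hp hnd hd; elim=> [|y s IH] /=; first by exists x; rewrite big_nil mulr1.
move=> /andP [ys us]; have [c hc] := IH us.
rewrite big_cons; case: ifP => hy; last by exists c.
have : mdvd (F y) ((\prod_(i <- s | Pr i) F i) * c) by rewrite mulrC -hc; apply: hd.
move/(prime_prod_cancel (hp _ hy)) => h.
have [c' hc'] : mdvd (F y) c.
  apply: h => i hi hPi; apply: hnd => //; apply/eqP => yi.
  by move: ys; rewrite yi hi.
by exists c'; rewrite hc hc' mulrA.
Qed.

End Alg.

From mathcomp Require Import ring.
Local Notation rv := Defs.rev.

Lemma key (n r : nat) (G : graph n) (alpha : E G -> 'rV[int]_r) PT
  (hrev : forall e, alpha (rv e) = alpha e \/ alpha (rv e) = - alpha e)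
  (hind : forall e e', e != e' -> src e = src e' ->
     forall a b : int, a *: alpha e + b *: alpha e' = 0 -> a = 0 /\ b = 0)
  (hprim : forall e, primitive (alpha e))
  (hPT : parallel_transport alpha PT) (p q : V G) (e : E G)
  (ep : src e = p) (eqq : tgt e = q) :
  let P := \prod_(e | (src e == p) && (tgt e != q)) lin (alpha e) in
  let Q := \prod_(e | (src e == q) && (tgt e != p)) lin (alpha e) in
  if odd (cnt alpha p q e) then mdvd (lin (alpha e)) (P + Q)
  else mdvd (lin (alpha e)) (P - Q).
Proof.
move=> P Q.
have rK := @Defs.revK n G.
have tr : forall f : E G, tgt (rv f) = src f by move=> f; rewrite -(src_rev (rv f)) rK.
have sre : src (rv e) = q by rewrite src_rev.
have PTre : forall f, src f = q -> PT e (PT (rv e) f) = f.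
  move=> f hf; have [_ h _ _] := hPT (rv e) f (etrans hf (esym sre)).
  by rewrite rK in h.
have PTee : PT (rv e) (rv e) = e.
  by have [_ _ h _] := hPT (rv e) (rv e) erefl; rewrite h rK.
set Sq := \prod_(f | (src f == q) && (f != rv e)) lin (alpha f).
set Sp := \prod_(f | (src f == p) && (f != e)) lin (alpha f).
set Rr := \prod_(f | [&& src f == p, tgt f == q & f != e]) lin (alpha f).
have step1 : Sq = \prod_(f | (src f == p) && (f != e)) lin (alpha (PT e f)).
  rewrite /Sq (reindex_onto (PT e) (PT (rv e))) => [|f /andP [/eqP fq _]]; last first.
    exact: PTre.
  apply: eq_bigl => f; case: (eqVneq (src f) p) => hf /=.
    have [h1 h2 h3 _] := hPT e f (etrans hf (esym ep)).
    rewrite h1 h2 eqq !eqxx andbT /=; congr negb; apply/eqP/eqP => [h|->//].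
    by rewrite -h2 h PTee.
  apply/negbTE/negP => /andP [/andP [/eqP hy _] /eqP hb].
  have [h1 _ _ _] := hPT (rv e) (PT e f) (etrans hy (esym sre)).
  by move: hf; rewrite -hb h1 tr ep eqxx.
have step2 : mdvd (lin (alpha e)) (Sq - Sp).
  rewrite step1 /Sp; apply: (big_ind2 (fun a b => mdvd (lin (alpha e)) (a - b))).
  - by rewrite subrr; exact: mdvd0.
  - move=> x1 x2 y1 y2 h1 h2.
    have -> : x1 * y1 - x2 * y2 = y1 * (x1 - x2) + x2 * (y1 - y2) by ring.
    by apply: mdvdD; apply: mdvdMl.
  - move=> f /andP [/eqP hf _]; have [_ _ _ [k hk]] := hPT e f (etrans hf (esym ep)).
    by exists k%:MP; rewrite -lin_opp -lin_add hk lin_scale.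
have step3 : Sp = Rr * P.
  rewrite /Sp (bigID (fun f => tgt f == q)) /=; congr (_ * _); apply: eq_bigl => f.
    by case: (src f == p); case: (tgt f == q); case: (f != e).
  case: (eqVneq f e) => [->|_]; first by rewrite eqq eqxx !andbF.
  by rewrite andbT.
have step4 : Sq = (-1) ^+ cnt alpha p q e * Rr * Q.
  rewrite /Sq (bigID (fun f => tgt f == p)) /=; congr (_ * _); last first.
    apply: eq_bigl => f.
    case: (eqVneq f (rv e)) => [->|_]; first by rewrite tr ep eqxx !andbF.
    by rewrite andbT.
  rewrite (reindex_inj (inv_inj rK)) /=.
  rewrite (eq_bigl (fun j => [&& src j == p, tgt j == q & j != e])); last first.
    move=> j; rewrite src_rev tr (inj_eq (inv_inj rK)).
    by case: (src j == p); case: (tgt j == q); case: (j != e).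
  rewrite (eq_bigr (fun j => (if alpha (rv j) == - alpha j then -1 else 1) * lin (alpha j))); last first.
    move=> j _; case: (hrev j) => h; rewrite h.
      case: eqP => [h'|_]; last by rewrite mul1r.
      by rewrite mulN1r -lin_opp -h'.
    by rewrite eqxx mulN1r lin_opp.
  rewrite big_split /=; congr (_ * _).
  rewrite (bigID (fun j => alpha (rv j) == - alpha j)) /= [X in _ * X]big1; last first.
    by move=> j /andP [_ /negbTE ->].
  rewrite mulr1 /cnt -prodr_const; apply: eq_big => j.
    by rewrite inE -!andbA.
  by move=> /andP [_ ->].
have step5 : mdvd (lin (alpha e)) ((-1) ^+ cnt alpha p q e * Q - P).
  apply: (prime_prod_cancel (s := index_enum (E G)) (Pr := fun f => [&& src f == p, tgt f == q & f != e]) (F := fun f => lin (alpha f))).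
  - exact: lin_prime.
  - move=> f _ /and3P [/eqP hf _ hfe]; apply: lin_nondiv => //.
    by apply: hind; [rewrite eq_sym | rewrite ep hf].
  - move: step2; rewrite step3 step4 -/Rr.
    by congr mdvd; ring.
rewrite -signr_odd in step5; case: (odd _) step5 => /= h.
  by move: (mdvdN h); rewrite opprB mulN1r opprK.
by move: (mdvdN h); rewrite opprB mul1r.
Qed.

Unset Implicit Arguments.
Set Strict Implicit.

Theorem corollary4p2 (n r : nat) (G : graph n) (alpha : E G -> 'rV[int]_r)
  (hGKM : abstract_GKM alpha) (p q : V G) (hpq : p != q) :
  let P := \prod_(e | (src e == p) && (tgt e != q)) lin (alpha e) in
  let Q := \prod_(e | (src e == q) && (tgt e != p)) lin (alpha e) in
  mdvd (\prod_(e | [&& src e == p, tgt e == q & ~~ odd (cnt alpha p q e)]) lin (alpha e))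
       (P - Q) /\
  mdvd (\prod_(e | [&& src e == p, tgt e == q & odd (cnt alpha p q e)]) lin (alpha e))
       (P + Q).
Proof.
move=> P Q.
have [[hrev [hind hprim]] [PT hPT]] := hGKM.
have hk := key hrev hind hprim hPT.
have hpr : forall f : E G, mprime (lin (alpha f)) by move=> f; apply: lin_prime; apply: hprim.
have hnd : forall f g : E G, src f = p -> src g = p -> f != g ->
    ~ mdvd (lin (alpha f)) (lin (alpha g)).
  move=> f g hf hg fg; apply: lin_nondiv; first exact: hprim.
  by apply: hind => //; rewrite hf hg.
split; apply: prod_dvd (index_enum_uniq _).
- by move=> f _; apply: hpr.
- by move=> f g /and3P [/eqP hf _ _] /and3P [/eqP hg _ _]; apply: hnd.
- move=> f /and3P [/eqP hf /eqP hq ho]; have := hk p q f hf hq.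
  by rewrite /= (negbTE ho).
- by move=> f _; apply: hpr.
- by move=> f g /and3P [/eqP hf _ _] /and3P [/eqP hg _ _]; apply: hnd.
- move=> f /and3P [/eqP hf /eqP hq ho]; have := hk p q f hf hq.
  by rewrite /= ho.
Qed.
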